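(* Let $(k,R,t)\in\mathbb{R}^3$ with $R>0$, $t\neq 0$, $k\neq 0$, $k\neq 1$, let $c=\frac{1-t^2}{1+t^2}$, $s=\frac{2t}{1+t^2}$, $g_k(u)=1-ks^2+2ksc\,u+ks^2u^2$, and let $G(X,u)=0$ be the reduced slope-chart equation of the trisector at its point at infinity $p_\infty=[0:0:1:0]$ (defined in the context). Then the local real projective structure near $p_\infty$ is constant on each connected component of $\{(k,R,t): R>0,\ t\neq 0,\ k\neq 0,\ k\neq 1\}$. More precisely: (1) If $k<0$ or $k>1$, then $g_k$ has two distinct real roots $u_+$ and $u_-$, and near each point $(X,u)=(0,u_\pm)$ the real zero set of $G$ is a transverse real $X$-shaped crossing (two smooth real branches crossing transversely). (2) If $0<k<1$, then $g_k$ has no real root, and no real branch of $\{G=0\}$ approaches the exceptional line $X=0$ at finite slope $u$. Consequently, the local topology at infinity is unchanged within each chamber of the complement of $\{k=0\}\cup\{k=1\}$.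
   Context: The trisector is the common zero set in $\mathbb{R}^3$ of $F_1=y^2-(xs-yc)^2+2z-1$ and $F_2=(x^2-2kz+R^2+k^2)^2-4R^2(x^2+y^2)$ (bisectors of the $x$-axis with the line through $(0,0,1)$ of direction $(c,s,0)$, and of the $x$-axis with the circle of radius $R$ centered at $(0,0,k)$ in the plane $z=k$). Homogenizations: $F_1^h=Y^2-(Xs-Yc)^2+2ZW-W^2$, $F_2^h=(X^2-2kZW+(R^2+k^2)W^2)^2-4R^2W^2(X^2+Y^2)$; the projective closure meets $W=0$ only at $p_\infty$. In the chart $Z=1$, $F_1^h(X,Y,1,W)=0$ is solved locally near the origin as $W=\omega(X,Y)=Q(X,Y)+O(\|(X,Y)\|^4)$ with $Q(X,Y)=\tfrac12(s^2X^2-2scXY-s^2Y^2)$. Slope coordinates: $Y=uX$. The reduced local equation is $G(X,u)=X^{-4}F_2^h(X,uX,1,\omega(X,uX))=g_k(u)^2+X^2H(X,u)$, where $H(X,u)=2(R^2+k^2)g_k(u)q(u)^2-4R^2(1+u^2)q(u)^2+O(X^2)$ and $q(u)=\tfrac12(s^2-2scu-s^2u^2)$. The line $X=0$ in the $(X,u)$-plane is the exceptional line parametrizing directions at $p_\infty$. *)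

(* Defs.v *)
From Stdlib Require Import Reals.
From Coquelicot Require Import Coquelicot.
Open Scope R_scope.

Definition cc (t : R) : R := (1 - t ^ 2) / (1 + t ^ 2).
Definition ss (t : R) : R := 2 * t / (1 + t ^ 2).

Definition gk (k t u : R) : R :=
  1 - k * ss t ^ 2 + 2 * k * ss t * cc t * u + k * ss t ^ 2 * u ^ 2.

Definition F1h (c s X Y Z W : R) : R :=
  Y ^ 2 - (X * s - Y * c) ^ 2 + 2 * Z * W - W ^ 2.
Definition F2h (k R0 X Y Z W : R) : R :=
  (X ^ 2 - 2 * k * Z * W + (R0 ^ 2 + k ^ 2) * W ^ 2) ^ 2
  - 4 * R0 ^ 2 * W ^ 2 * (X ^ 2 + Y ^ 2).

(* omega(X,Y): the local solution W of F1h(X,Y,1,W) = 0 near the origin with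
   omega(0,0) = 0, i.e. the root W = 1 - sqrt(1 + Y^2 - (Xs - Yc)^2) of
   W^2 - 2W - (Y^2 - (Xs-Yc)^2) = 0. *)
Definition omega (c s X Y : R) : R :=
  1 - sqrt (1 + Y ^ 2 - (X * s - Y * c) ^ 2).

(* Reduced local equation in the slope chart Y = uX:
   G(X,u) = X^-4 F2h(X, uX, 1, omega(X,uX)) for X <> 0, extended
   (continuously / analytically) to the exceptional line X = 0 by its limit
   g_k(u)^2. *)
Definition Gred (k R0 t X u : R) : R :=
  if Req_dec_T X 0 then gk k t u ^ 2
  else F2h k R0 X (u * X) 1 (omega (cc t) (ss t) X (u * X)) / X ^ 4.

Definition smooth_on (f : R -> R) (a b : R) : Prop :=
  forall (n : nat) (x : R), a < x < b -> ex_derive_n f n x.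

Definition transverse_X_crossing (G : R -> R -> R) (u0 : R) : Prop :=
  exists eps : R, 0 < eps /\
  exists phi1 phi2 : R -> R,
    smooth_on phi1 (- eps) eps /\ smooth_on phi2 (- eps) eps /\
    phi1 0 = u0 /\ phi2 0 = u0 /\
    Derive phi1 0 <> Derive phi2 0 /\
    (forall X u, Rabs X < eps -> Rabs (u - u0) < eps ->
       (G X u = 0 <-> (u = phi1 X \/ u = phi2 X))).

Definition no_branch_at (G : R -> R -> R) (u0 : R) : Prop :=
  exists eps : R, 0 < eps /\
    forall X u, Rabs X < eps -> Rabs (u - u0) < eps -> G X u <> 0.

(* Main.v *)
Require Import Defs.
From Stdlib Require Import Reals Lra Psatz Ranalysis5 ClassicalEpsilon.
From Coquelicot Require Import Coquelicot.
Open Scope R_scope.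

Fixpoint Ck (n : nat) (D : R -> Prop) (f : R -> R) : Prop :=
  match n with
  | O => True
  | S n => (forall x, D x -> ex_derive f x) /\ Ck n D (Derive f)
  end.

Lemma loc_of_open (D : R -> Prop) (P : R -> Prop) x :
  open D -> D x -> (forall y, D y -> P y) -> locally x P.
Proof.
  intros HD Hx HP. specialize (HD x Hx).
  destruct HD as [e He]. exists e. intros y Hy. apply HP, He, Hy.
Qed.

Lemma Ck_ext n : forall D f g, open D -> (forall x, D x -> f x = g x) ->
  Ck n D f -> Ck n D g.
Proof.
  induction n as [|n IH]; simpl; auto.
  intros D f g HD Hfg [H1 H2]. split.
  - intros x Hx. apply ex_derive_ext_loc with f; auto.
    apply (loc_of_open D); auto.
  - apply IH with (Derive f); auto.
    intros x Hx. apply Derive_ext_loc. apply (loc_of_open D); auto.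
Qed.

Lemma Ck_S n : forall D f, Ck (S n) D f -> Ck n D f.
Proof.
  induction n as [|n IH]; [simpl; auto|].
  intros D f [H1 H2]. split; auto.
Qed.

Lemma Ck_le n m D f : (m <= n)%nat -> Ck n D f -> Ck m D f.
Proof.
  induction 1; auto. intros H'. apply IHle. apply Ck_S. exact H'.
Qed.

Lemma Ck_sub n : forall (D D' : R -> Prop) f, (forall x, D' x -> D x) -> Ck n D f -> Ck n D' f.
Proof.
  induction n as [|n IH]; simpl; auto.
  intros D D' f HD [H1 H2]. split; eauto.
Qed.

Lemma Ck_const n : forall D (a : R), open D -> Ck n D (fun _ => a).
Proof.
  induction n as [|n IH]; simpl; auto. intros D a HD. split.
  - intros; apply ex_derive_const.
  - apply Ck_ext with (fun _ => 0); auto.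
    intros x _. rewrite Derive_const. reflexivity.
Qed.

Lemma Ck_id n : forall D, open D -> Ck n D (fun x => x).
Proof.
  destruct n as [|n]; simpl; auto. intros D HD. split.
  - intros; apply ex_derive_id.
  - apply Ck_ext with (fun _ => 1); auto using Ck_const.
    intros x _. rewrite Derive_id. reflexivity.
Qed.

Lemma Ck_plus n : forall D f g, open D -> Ck n D f -> Ck n D g -> Ck n D (fun x => f x + g x).
Proof.
  induction n as [|n IH]; simpl; auto.
  intros D f g HD [F1 F2] [G1 G2]. split.
  - intros x Hx. exact (ex_derive_plus f g x (F1 x Hx) (G1 x Hx)).
  - apply Ck_ext with (fun x => Derive f x + Derive g x); auto.
    intros x Hx. rewrite Derive_plus; auto.
Qed.

Lemma Ck_mult n : forall D f g, open D -> Ck n D f -> Ck n D g -> Ck n D (fun x => f x * g x).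
Proof.
  induction n as [|n IH]; simpl; auto.
  intros D f g HD Hf Hg.
  assert (Hf' := Hf); assert (Hg' := Hg).
  destruct Hf as [F1 F2]; destruct Hg as [G1 G2]. split.
  - intros x Hx. apply ex_derive_mult; auto.
  - apply Ck_ext with (fun x => Derive f x * g x + f x * Derive g x); auto.
    + intros x Hx. rewrite Derive_mult; auto.
    + apply Ck_plus; auto; apply IH; auto; apply (Ck_S n); simpl; auto.
Qed.

Lemma Ck_comp n : forall D E h p, open D -> open E -> (forall x, D x -> E (p x)) ->
  Ck n E h -> Ck n D p -> Ck n D (fun x => h (p x)).
Proof.
  induction n as [|n IH]; simpl; auto.
  intros D E h p HD HE Hp Hh Hpp.
  assert (Hh' := Hh); assert (Hp' := Hpp).
  destruct Hh as [H1 H2]; destruct Hpp as [P1 P2]. split.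
  - intros x Hx. apply ex_derive_comp; auto.
  - apply Ck_ext with (fun x => Derive p x * Derive h (p x)); auto.
    + intros x Hx. symmetry. apply Derive_comp; auto.
    + apply Ck_mult; auto. apply IH with E; auto.
      apply (Ck_S n); simpl; auto.
Qed.

Lemma open_neq0 : open (fun x : R => x <> 0).
Proof. apply open_neq. Qed.
Lemma open_pos : open (fun x : R => 0 < x).
Proof. apply open_gt. Qed.

Lemma is_derive_Rinv x : x <> 0 -> is_derive Rinv x (-1 * (/ x * / x)).
Proof.
  intros Hx.
  assert (H := is_derive_inv (fun y => y) x 1 (is_derive_id x) Hx).
  simpl in H. replace (-1 * (/ x * / x)) with (- 1 / (x ^ 2)). exact H.
  field. exact Hx.
Qed.

Lemma Ck_inv n : Ck n (fun x => x <> 0) Rinv.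
Proof.
  induction n as [|n IH]; simpl; auto. split.
  - intros x Hx. eexists. apply is_derive_Rinv; auto.
  - apply Ck_ext with (fun x => (-1) * (Rinv x * Rinv x)); auto using open_neq0.
    + intros x Hx. symmetry. apply is_derive_unique. apply is_derive_Rinv; auto.
    + apply Ck_mult; auto using open_neq0, Ck_const.
      apply Ck_mult; auto using open_neq0.
Qed.

Lemma is_derive_sqrt' x : 0 < x -> is_derive sqrt x (/ (2 * sqrt x)).
Proof.
  intros Hx. assert (H := is_derive_sqrt (fun y => y) x 1 (is_derive_id x) Hx).
  simpl in H. replace (/ (2 * sqrt x)) with (1 / (2 * sqrt x)). exact H.
  field. apply Rgt_not_eq. apply sqrt_lt_R0. exact Hx.
Qed.

Lemma Ck_sqrt n : Ck n (fun x => 0 < x) sqrt.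
Proof.
  induction n as [|n IH]; simpl; auto. split.
  - intros x Hx. eexists. apply is_derive_sqrt'; auto.
  - apply Ck_ext with (fun x => Rinv (2 * sqrt x)); auto using open_pos.
    + intros x Hx. symmetry. apply is_derive_unique. apply is_derive_sqrt'; auto.
    + apply Ck_comp with (fun x => x <> 0); [apply open_pos|apply open_neq0| |apply Ck_inv|].
      * intros x Hx. apply Rgt_not_eq. apply Rmult_lt_0_compat. lra. apply sqrt_lt_R0. exact Hx.
      * apply Ck_mult; auto using open_pos, Ck_const.
Qed.

Lemma Ck_ex_derive_n n : forall D f, open D -> Ck n D f -> forall x, D x -> ex_derive_n f n x.
Proof.
  induction n as [|n IH]; intros D f HD Hf x Hx; [simpl; auto|].
  destruct Hf as [F1 F2].
  destruct n as [|n].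
  - simpl. apply F1, Hx.
  - assert (H : ex_derive_n (Derive f) (S n) x) by (apply IH with D; auto).
    simpl in H |- *.
    apply ex_derive_ext with (Derive_n (Derive f) n); auto.
    intros y. change (Derive f) with (Derive_n f 1).
    rewrite Derive_n_comp. rewrite Nat.add_comm. reflexivity.
Qed.


Lemma open_int (a b : R) : open (fun x => a < x < b).
Proof. apply open_and; [apply open_gt | apply open_lt]. Qed.

Lemma inv_fun (T : R -> R) (a b lb ub : R) :
  a < lb -> lb < ub -> ub < b ->
  (forall n, Ck n (fun u => a < u < b) T) ->
  (forall u, a < u < b -> 0 < Derive T u) ->
  exists p : R -> R,
    (forall y, T lb <= y <= T ub -> lb <= p y <= ub /\ T (p y) = y) /\
    (forall n, Ck n (fun y => T lb < y < T ub) p) /\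
    (forall y, T lb < y < T ub -> is_derive p y (/ Derive T (p y))) /\
    (forall x y, a < x -> x < y -> y < b -> T x < T y).
Proof.
  intros Hal Hlu Hub HT HD.
  assert (Hex : forall u, a < u < b -> ex_derive T u).
  { intros u Hu. destruct (HT 1%nat) as [H _]. auto. }
  assert (Hincr : forall x y, a < x -> x < y -> y < b -> T x < T y).
  { intros x y Hx Hxy Hy.
    apply (incr_function T a b (Derive T)); simpl; auto.
    - intros z Hz1 Hz2. apply Derive_correct. apply Hex. lra.
    - intros z Hz1 Hz2. apply HD. lra. }
  assert (Hcont : forall u, a < u < b -> continuity_pt T u).
  { intros u Hu. apply derivable_continuous_pt. apply ex_derive_Reals_0. auto. }
  assert (Hsol : forall y, T lb <= y <= T ub -> exists u, lb <= u <= ub /\ T u = y).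
  { intros y [Hy1 Hy2].
    destruct (Req_dec y (T lb)) as [E|E]. { exists lb. split; [lra|auto]. }
    destruct (Req_dec y (T ub)) as [E'|E']. { exists ub. split; [lra|auto]. }
    destruct (IVT_interv (fun u => T u - y) lb ub) as [z [Hz1 Hz2]].
    - intros u Hu. apply continuity_pt_minus. apply Hcont. lra. apply continuity_pt_const. intros ? ?; reflexivity.
    - lra.
    - lra.
    - lra.
    - exists z. split; auto. lra. }
  set (p := fun y => epsilon (inhabits 0) (fun u => lb <= u <= ub /\ T u = y)).
  assert (Hp : forall y, T lb <= y <= T ub -> lb <= p y <= ub /\ T (p y) = y).
  { intros y Hy. apply (epsilon_spec (inhabits 0) (fun u => lb <= u <= ub /\ T u = y)). auto. }
  assert (Hinj : forall x y, a < x < b -> a < y < b -> T x = T y -> x = y).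
  { intros x y Hx Hy E. destruct (Rtotal_order x y) as [H|[H|H]]; auto.
    - specialize (Hincr x y). lra.
    - specialize (Hincr y x). lra. }
  assert (Hplb : p (T lb) = lb).
  { destruct (Hp (T lb)) as [H1 H2]. split; [lra| apply Rlt_le, Hincr; lra].
    apply Hinj; auto; lra. }
  assert (Hpub : p (T ub) = ub).
  { destruct (Hp (T ub)) as [H1 H2]. split; [apply Rlt_le, Hincr; lra| lra].
    apply Hinj; auto; lra. }
  assert (Hpd : forall y, T lb < y < T ub -> is_derive p y (/ Derive T (p y))).
  { intros y Hy.
    assert (Hcp : continuity_pt p y).
    { apply (continuity_pt_recip_interv T p lb ub); auto.
      - intros x z Hx Hxz Hz. apply Hincr; lra.
      - intros x Hx1 Hx2. unfold comp, id. apply Hp. lra.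
      - intros x Hx1 Hx2. apply Hp. lra.
      - intros x Hx. apply Hcont. lra. }
    assert (Prf : forall u, p (T lb) <= u <= p (T ub) -> derivable_pt T u).
    { intros u Hu. apply ex_derive_Reals_0. apply Hex. rewrite Hplb, Hpub in Hu. lra. }
    assert (Hlt : T lb < T ub) by (apply Hincr; lra).
    assert (Prg : p (T lb) <= p y <= p (T ub)).
    { rewrite Hplb, Hpub. apply Hp. lra. }
    assert (Hpy : lb <= p y <= ub) by (apply Hp; lra).
    assert (Edp : derive_pt T (p y) (Prf (p y) Prg) = Derive T (p y)).
    { apply derive_pt_eq_0. apply is_derive_Reals. apply Derive_correct. apply Hex. lra. }
    assert (H := derivable_pt_lim_recip_interv T p (T lb) (T ub) y Prf Hcp Hlt Hy Prg).
    rewrite Edp in H.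
    apply is_derive_Reals. replace (/ Derive T (p y)) with (1 / Derive T (p y)) by (field; apply Rgt_not_eq, HD; lra).
    apply H.
    - intros x Hx. unfold comp, id. apply Hp. exact Hx.
    - apply Rgt_not_eq, HD; lra. }
  exists p. split; [exact Hp|]. split; [|split; [exact Hpd|exact Hincr]].
  assert (Hrange : forall y, T lb < y < T ub -> a < p y < b).
  { intros y Hy. destruct (Hp y) as [H1 _]; lra. }
  intros n. induction n as [|n IH]; simpl; auto. split.
  - intros y Hy. eexists. apply Hpd; auto.
  - apply Ck_ext with (fun y => Rinv (Derive T (p y))); auto using open_int.
    + intros y Hy. symmetry. apply is_derive_unique. apply Hpd; auto.
    + apply (Ck_comp n _ (fun u => a < u < b) (fun u => / Derive T u) p); auto using open_int.
      apply (Ck_comp n _ (fun x => x <> 0) Rinv (Derive T)); auto using open_int, open_neq0, Ck_inv.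
      * intros u Hu. apply Rgt_not_eq, HD; auto.
      * destruct (HT (S n)) as [_ H]. exact H.
Qed.


Definition qq t u := (ss t ^ 2 - 2 * ss t * cc t * u - ss t ^ 2 * u ^ 2) / 2.
Definition KK k R0 := R0 ^ 2 + k ^ 2 - k.

Lemma cs_id t : cc t ^ 2 + ss t ^ 2 = 1.
Proof.
  unfold cc, ss. assert (0 < 1 + t ^ 2) by nra. field. lra.
Qed.

Lemma g_q k t u : gk k t u = 1 - 2 * k * qq t u.
Proof. unfold gk, qq. field. Qed.

Lemma omega_arg t X u :
  1 + (u * X) ^ 2 - (X * ss t - u * X * cc t) ^ 2 = 1 - 2 * qq t u * X ^ 2.
Proof.
  replace (1 + (u * X) ^ 2 - (X * ss t - u * X * cc t) ^ 2)
    with (1 - 2 * qq t u * X ^ 2 + (u * X) ^ 2 * (1 - (cc t ^ 2 + ss t ^ 2)))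
    by (unfold qq; field).
  rewrite cs_id. ring.
Qed.

Lemma Gred_fact k R0 t X u : X <> 0 -> 0 <= 1 - 2 * qq t u * X ^ 2 ->
  Gred k R0 t X u =
   (gk k t u + KK k R0 * ((1 - sqrt (1 - 2 * qq t u * X ^ 2)) / X) ^ 2) ^ 2
   - 4 * R0 ^ 2 * (1 + u ^ 2) * ((1 - sqrt (1 - 2 * qq t u * X ^ 2)) / X) ^ 2 /\
  2 * ((1 - sqrt (1 - 2 * qq t u * X ^ 2)) / X) =
   X * (2 * qq t u + ((1 - sqrt (1 - 2 * qq t u * X ^ 2)) / X) ^ 2).
Proof.
  intros HX Hpos. unfold Gred.
  destruct (Req_dec_T X 0) as [E|_]; [contradiction|].
  unfold omega. rewrite omega_arg.
  assert (HS := sqrt_sqrt _ Hpos).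
  set (S := sqrt (1 - 2 * qq t u * X ^ 2)) in *.
  set (nu := (1 - S) / X).
  assert (HW : 1 - S = nu * X) by (unfold nu; field; auto).
  rewrite HW.
  assert (Hn : 2 * nu = X * (2 * qq t u + nu ^ 2)).
  { assert (H1 : X * (2 * nu - X * (2 * qq t u + nu ^ 2)) = 0).
    { replace (X * (2 * nu - X * (2 * qq t u + nu ^ 2)))
        with (2 * (nu * X) - (nu * X) ^ 2 - 2 * qq t u * X ^ 2) by ring.
      rewrite <- HW. nra. }
    apply Rmult_integral in H1. destruct H1 as [H1|H1]; [contradiction|lra]. }
  split; [|exact Hn].
  set (q := qq t u) in *.
  assert (HA : X ^ 2 - 2 * k * 1 * (nu * X) + (R0 ^ 2 + k ^ 2) * (nu * X) ^ 2
               = X ^ 2 * (gk k t u + KK k R0 * nu ^ 2)).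
  { assert (E : X ^ 2 - 2 * k * 1 * (nu * X) + (R0 ^ 2 + k ^ 2) * (nu * X) ^ 2
               - X ^ 2 * (gk k t u + KK k R0 * nu ^ 2)
               = - k * X * (2 * nu - X * (2 * q + nu ^ 2)))
      by (rewrite g_q; unfold KK, q; ring).
    rewrite Hn in E. lra. }
  unfold F2h. rewrite HA. field. auto.
Qed.


Lemma s_nz t : t <> 0 -> ss t <> 0.
Proof.
  intros Ht. unfold ss. assert (0 < 1 + t ^ 2) by nra.
  intro E. apply Ht. apply (Rmult_eq_compat_r (1 + t ^ 2)) in E.
  field_simplify in E; lra.
Qed.

Lemma abs_b x : - Rabs x <= x <= Rabs x.
Proof. unfold Rabs; destruct Rcase_abs; lra. Qed.

Lemma q_bound t u : 2 * Rabs (qq t u) <= (1 + Rabs u) ^ 2.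
Proof.
  assert (H := cs_id t). unfold qq.
  set (s := ss t) in *. set (c := cc t) in *.
  assert (Hs : s ^ 2 <= 1) by nra.
  assert (Hsc : 2 * Rabs (s * c) <= 1).
  { rewrite Rabs_mult. assert (Hsa := Rabs_pos s). assert (Hca := Rabs_pos c).
    assert (Rabs s ^ 2 = s ^ 2) by (apply pow2_abs).
    assert (Rabs c ^ 2 = c ^ 2) by (apply pow2_abs).
    assert (0 <= (Rabs s - Rabs c) ^ 2) by apply pow2_ge_0. nra. }
  assert (Hu : Rabs u ^ 2 = u ^ 2) by (apply pow2_abs).
  assert (Hua := Rabs_pos u).
  assert (Hscu : Rabs (2 * s * c * u) <= Rabs u).
  { replace (2 * s * c * u) with (2 * (s * c) * u) by ring.
    rewrite (Rabs_mult (2 * (s * c)) u), (Rabs_mult 2 (s * c)). rewrite (Rabs_pos_eq 2) by lra.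
    assert (0 <= Rabs (s * c)) by apply Rabs_pos. nra. }
  replace ((s ^ 2 - 2 * s * c * u - s ^ 2 * u ^ 2) / 2)
    with ((s ^ 2 - 2 * s * c * u - s ^ 2 * u ^ 2) * / 2) by reflexivity.
  rewrite Rabs_mult. rewrite (Rabs_pos_eq (/2)) by lra.
  assert (Rabs (s ^ 2 - 2 * s * c * u - s ^ 2 * u ^ 2) <= 1 + 2 * Rabs u + u ^ 2).
  { apply Rabs_le. split.
    - assert (Hm := abs_b (2 * s * c * u)). nra.
    - assert (Hm := abs_b (2 * s * c * u)). nra. }
  nra.
Qed.

Lemma nu_bound q X : X <> 0 -> 0 <= 1 - 2 * q * X ^ 2 ->
  Rabs ((1 - sqrt (1 - 2 * q * X ^ 2)) / X) <= 2 * Rabs q * Rabs X.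
Proof.
  intros HX Hp. assert (HS := sqrt_sqrt _ Hp). assert (HS0 := sqrt_pos (1 - 2 * q * X ^ 2)).
  set (S := sqrt (1 - 2 * q * X ^ 2)) in *.
  replace ((1 - S) / X) with (2 * q * X / (1 + S)).
  - unfold Rdiv. rewrite Rabs_mult. rewrite (Rabs_pos_eq (/ (1 + S))).
    + rewrite Rabs_mult, Rabs_mult, (Rabs_pos_eq 2) by lra.
      assert (0 <= 2 * Rabs q * Rabs X) by (assert (H1 := Rabs_pos q); assert (H2 := Rabs_pos X); nra).
      assert (0 < / (1 + S) <= 1).
      { split. apply Rinv_0_lt_compat; lra. rewrite <- Rinv_1. apply Rinv_le_contravar; lra. }
      nra.
    + apply Rlt_le, Rinv_0_lt_compat; lra.
  - field_simplify_eq; [|split; lra]. nra.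
Qed.

Lemma g_lower k t u : 0 < k -> t <> 0 -> 1 - k <= gk k t u.
Proof.
  intros Hk Ht. assert (Hs := s_nz t Ht). assert (H := cs_id t).
  assert (E : k * ss t ^ 2 * (gk k t u - (1 - k)) - (k * ss t ^ 2 * u + k * ss t * cc t) ^ 2
              = k ^ 2 * ss t ^ 2 * (1 - (cc t ^ 2 + ss t ^ 2))) by (unfold gk; ring).
  rewrite H in E.
  assert (0 < k * ss t ^ 2) by (apply Rmult_lt_0_compat; auto; destruct (Rdichotomy _ _ Hs); nra).
  assert (Hp : 0 <= k * ss t ^ 2 * (gk k t u - (1 - k))).
  { assert (0 <= (k * ss t ^ 2 * u + k * ss t * cc t) ^ 2) by apply pow2_ge_0. lra. }
  destruct (Rle_or_lt (1 - k) (gk k t u)); auto. exfalso. nra.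
Qed.

Lemma Gred_0 k R0 t u : Gred k R0 t 0 u = gk k t u ^ 2.
Proof. unfold Gred. destruct (Req_dec_T 0 0); [reflexivity|congruence]. Qed.

Lemma part2 k R0 t : 0 < R0 -> t <> 0 -> 0 < k < 1 ->
  (forall u, gk k t u <> 0) /\ (forall u0, no_branch_at (Gred k R0 t) u0).
Proof.
  intros HR Ht Hk.
  assert (Hg : forall u, 1 - k <= gk k t u) by (intros; apply g_lower; lra).
  split. { intros u. specialize (Hg u). lra. }
  intros u0.
  set (B := Rabs u0 + 1).
  assert (HB : 1 <= B) by (unfold B; assert (H := Rabs_pos u0); lra).
  set (Qb := (1 + B) ^ 2).
  assert (HQ : 4 <= Qb) by (unfold Qb; nra).
  set (C := (R0 ^ 2 + 1) * Qb + 2 * R0 * (1 + B)).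
  assert (HC : 0 < C) by (unfold C; nra).
  set (eps := Rmin (1 / (2 * Qb)) ((1 - k) / (2 * (Qb * C + 1)))).
  assert (He1 : eps <= 1 / (2 * Qb)) by apply Rmin_l.
  assert (He2 : eps <= (1 - k) / (2 * (Qb * C + 1))) by apply Rmin_r.
  assert (Hepos : 0 < eps).
  { apply Rmin_pos; apply Rdiv_lt_0_compat; nra. }
  assert (HeQ : Qb * eps <= 1 / 2).
  { apply (Rmult_le_compat_l Qb) in He1; [|lra]. replace (Qb * (1 / (2 * Qb))) with (1/2) in He1 by (field; lra). lra. }
  assert (HeC : Qb * C * eps <= (1 - k) / 2).
  { apply (Rmult_le_compat_l (Qb * C)) in He2; [|nra].
    assert (Qb * C * ((1 - k) / (2 * (Qb * C + 1))) <= (1 - k) / 2).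
    { unfold Rdiv. rewrite <- Rmult_assoc.
      replace (Qb * C * (1 - k) * / (2 * (Qb * C + 1))) with ((1 - k) / 2 * (Qb * C / (Qb * C + 1))) by (field; nra).
      assert (Qb * C / (Qb * C + 1) <= 1).
      { apply Rmult_le_reg_r with (Qb * C + 1); [nra|]. unfold Rdiv. rewrite Rmult_assoc, Rinv_l; nra. }
      nra. }
    lra. }
  exists eps. split; [exact Hepos|].
  intros X u HX Hu.
  assert (Hub : Rabs u <= B).
  { unfold B. replace u with ((u - u0) + u0) by ring.
    eapply Rle_trans; [apply Rabs_triang|]. assert (eps <= 1) by nra. lra. }
  assert (Hq : 2 * Rabs (qq t u) <= Qb).
  { eapply Rle_trans; [apply q_bound|]. unfold Qb. assert (H := Rabs_pos u). nra. }
  destruct (Req_dec X 0) as [HX0|HX0].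
  { subst X. rewrite Gred_0. specialize (Hg u). nra. }
  assert (HXa := Rabs_pos X).
  assert (HXX : X ^ 2 = Rabs X ^ 2) by (rewrite pow2_abs; reflexivity).
  assert (Hqa := Rabs_pos (qq t u)).
  assert (Hpos : 0 <= 1 - 2 * qq t u * X ^ 2).
  { assert (H1 : Rabs (2 * qq t u * X ^ 2) <= 1 / 2).
    { rewrite Rabs_mult, Rabs_mult, (Rabs_pos_eq 2) by lra.
      rewrite (Rabs_pos_eq (X ^ 2)) by apply pow2_ge_0. rewrite HXX.
      assert (Rabs X ^ 2 <= eps) by nra. nra. }
    assert (H2 := abs_b (2 * qq t u * X ^ 2)). lra. }
  destruct (Gred_fact k R0 t X u HX0 Hpos) as [E _].
  rewrite E.
  set (nu := (1 - sqrt (1 - 2 * qq t u * X ^ 2)) / X).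
  assert (Hnu : Rabs nu <= Qb * eps).
  { eapply Rle_trans; [apply nu_bound; auto|]. nra. }
  assert (Hnua := Rabs_pos nu).
  assert (Hnn : nu ^ 2 = Rabs nu ^ 2) by (rewrite pow2_abs; reflexivity).
  set (v := Rabs nu) in *.
  assert (HK : Rabs (KK k R0) <= R0 ^ 2 + 1).
  { unfold KK. apply Rabs_le. nra. }
  assert (HKn := abs_b (KK k R0)).
  assert (Hsmall : (R0 ^ 2 + 1) * v ^ 2 + 2 * R0 * (1 + B) * v < 1 - k).
  { assert (v <= 1) by lra.
    assert (Hv2 : v ^ 2 <= Qb * v) by nra.
    assert ((R0 ^ 2 + 1) * v ^ 2 <= (R0 ^ 2 + 1) * Qb * v).
    { rewrite Rmult_assoc. apply Rmult_le_compat_l; nra. }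
    assert (C * v <= C * (Qb * eps)) by (apply Rmult_le_compat_l; lra).
    assert (C * v = (R0 ^ 2 + 1) * Qb * v + 2 * R0 * (1 + B) * v) by (unfold C; ring).
    assert (C * (Qb * eps) = Qb * C * eps) by ring.
    lra. }
  assert (HP : 2 * R0 * (1 + B) * v < gk k t u + KK k R0 * nu ^ 2).
  { specialize (Hg u). rewrite Hnn.
    assert (KK k R0 * v ^ 2 >= - ((R0 ^ 2 + 1) * v ^ 2)) by nra. lra. }
  assert (Hu2 : 1 + u ^ 2 <= (1 + B) ^ 2).
  { rewrite <- (pow2_abs u). assert (H := Rabs_pos u). nra. }
  assert (0 <= 2 * R0 * (1 + B) * v) by (apply Rmult_le_pos; [apply Rmult_le_pos|]; lra).
  assert (4 * R0 ^ 2 * (1 + u ^ 2) * nu ^ 2 <= (2 * R0 * (1 + B) * v) ^ 2).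
  { rewrite Hnn. assert (0 <= R0 ^ 2 * v ^ 2) by (apply Rmult_le_pos; apply pow2_ge_0).
    replace ((2 * R0 * (1 + B) * v) ^ 2) with (4 * (R0 ^ 2 * v ^ 2) * (1 + B) ^ 2) by ring.
    replace (4 * R0 ^ 2 * (1 + u ^ 2) * v ^ 2) with (4 * (R0 ^ 2 * v ^ 2) * (1 + u ^ 2)) by ring.
    apply Rmult_le_compat_l; lra. }
  assert ((2 * R0 * (1 + B) * v) ^ 2 < (gk k t u + KK k R0 * nu ^ 2) ^ 2).
  { set (a := 2 * R0 * (1 + B) * v) in *. set (b := gk k t u + KK k R0 * nu ^ 2) in *.
    assert (b ^ 2 - a ^ 2 = (b - a) * (b + a)) by ring.
    assert (0 < (b - a) * (b + a)) by (apply Rmult_lt_0_compat; lra). lra. }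
  lra.
Qed.


Lemma Ck_minus n D f g : open D -> Ck n D f -> Ck n D g -> Ck n D (fun x => f x - g x).
Proof.
  intros HD Hf Hg. apply Ck_ext with (fun x => f x + (-1) * g x); auto.
  intros; ring. apply Ck_plus; auto. apply Ck_mult; auto using Ck_const.
Qed.

Lemma Ck_pow n D f m : open D -> Ck n D f -> Ck n D (fun x => f x ^ m).
Proof.
  intros HD Hf. induction m as [|m IH]; simpl.
  - apply Ck_const; auto.
  - apply Ck_mult; auto.
Qed.

Lemma Ck_div n D f g : open D -> (forall x, D x -> g x <> 0) ->
  Ck n D f -> Ck n D g -> Ck n D (fun x => f x / g x).
Proof.
  intros HD Hg Hf Hg'. apply Ck_mult; auto.
  apply (Ck_comp n D (fun x => x <> 0) Rinv g); auto using open_neq0, Ck_inv.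
Qed.

Lemma Ck_sqrtc n D f : open D -> (forall x, D x -> 0 < f x) ->
  Ck n D f -> Ck n D (fun x => sqrt (f x)).
Proof.
  intros HD Hf Hf'.
  apply (Ck_comp n D (fun x => 0 < x) sqrt f); auto using open_pos, Ck_sqrt.
Qed.

Ltac ck := repeat first [ assumption | apply Ck_minus | apply Ck_plus | apply Ck_mult
   | apply Ck_pow | apply Ck_const | apply Ck_id ].

Definition Dsc k R0 t u := R0 ^ 2 * (1 + u ^ 2) - KK k R0 * gk k t u.
Definition den k R0 t u := R0 * sqrt (1 + u ^ 2) + sqrt (Dsc k R0 t u).
Definition mu k R0 t u := gk k t u / den k R0 t u.
Definition Xi k R0 t u := 2 * mu k R0 t u / (2 * qq t u + mu k R0 t u ^ 2).

Lemma Ck_g n D k t : open D -> Ck n D (fun u => gk k t u).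
Proof. intros HD. unfold gk. ck. Qed.
Lemma Ck_q n D t : open D -> Ck n D (fun u => qq t u).
Proof. intros HD. unfold qq. apply Ck_div; [exact HD | intros; lra | ck | ck]. Qed.

Lemma den_pos k R0 t u : 0 < R0 -> R0 <= den k R0 t u.
Proof.
  intros HR. unfold den.
  assert (1 <= sqrt (1 + u ^ 2)).
  { assert (H := sqrt_le_1_alt 1 (1 + u ^ 2)). rewrite sqrt_1 in H. apply H. nra. }
  assert (0 <= sqrt (Dsc k R0 t u)) by apply sqrt_pos. nra.
Qed.

Lemma Ck_den n D k R0 t : 0 < R0 -> open D -> (forall u, D u -> 0 < Dsc k R0 t u) ->
  Ck n D (fun u => den k R0 t u).
Proof.
  intros HR HD HDs. unfold den. apply Ck_plus; auto.
  - apply Ck_mult; auto using Ck_const. apply Ck_sqrtc; [exact HD | intros; nra | ck].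
  - apply Ck_sqrtc; [exact HD | exact HDs |]. unfold Dsc. ck; try (apply Ck_g; auto).
Qed.

Lemma Ck_mu n D k R0 t : 0 < R0 -> open D -> (forall u, D u -> 0 < Dsc k R0 t u) ->
  Ck n D (fun u => mu k R0 t u).
Proof.
  intros HR HD HDs. unfold mu. apply Ck_div; auto.
  - intros u _. assert (H := den_pos k R0 t u HR). lra.
  - apply Ck_g; auto.
  - apply Ck_den; auto.
Qed.

Lemma Ck_Xi n D k R0 t : 0 < R0 -> open D -> (forall u, D u -> 0 < Dsc k R0 t u) ->
  (forall u, D u -> 2 * qq t u + mu k R0 t u ^ 2 <> 0) ->
  Ck n D (fun u => Xi k R0 t u).
Proof.
  intros HR HD HDs Hq. unfold Xi. apply Ck_div; auto.
  - apply Ck_mult; auto using Ck_const, Ck_mu.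
  - apply Ck_plus; auto. apply Ck_mult; auto using Ck_const, Ck_q.
    apply Ck_pow; auto. apply Ck_mu; auto.
Qed.

Lemma is_derive_prod0 (f h : R -> R) x a : f x = 0 -> is_derive f x a -> ex_derive h x ->
  is_derive (fun y => f y * h y) x (a * h x).
Proof.
  intros H0 Hf [b Hh].
  assert (H := is_derive_mult f h x a b Hf Hh Rmult_comm).
  simpl in H. unfold mult, plus in H; simpl in H. rewrite H0 in H.
  replace (a * h x) with (a * h x + 0 * b) by ring. exact H.
Qed.

Lemma Xi_root_deriv k R0 t D u0 : 0 < R0 -> open D -> D u0 ->
  (forall u, D u -> 0 < Dsc k R0 t u) ->
  (forall u, D u -> 2 * qq t u + mu k R0 t u ^ 2 <> 0) ->
  gk k t u0 = 0 ->
  is_derive (fun u => Xi k R0 t u) u0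
    (2 * ((2 * k * ss t * cc t + 2 * k * ss t ^ 2 * u0) * / den k R0 t u0) * / (2 * qq t u0)).
Proof.
  intros HR HD Hu0 HDs Hq Hg.
  assert (Hmu0 : mu k R0 t u0 = 0) by (unfold mu; rewrite Hg; unfold Rdiv; ring).
  assert (Hgd : is_derive (fun u => gk k t u) u0 (2 * k * ss t * cc t + 2 * k * ss t ^ 2 * u0)).
  { unfold gk. auto_derive; auto. ring. }
  assert (Hmud : is_derive (fun u => mu k R0 t u) u0
            ((2 * k * ss t * cc t + 2 * k * ss t ^ 2 * u0) * / den k R0 t u0)).
  { unfold mu. apply (is_derive_prod0 (fun u => gk k t u) (fun u => / den k R0 t u)); auto.
    assert (Hc : Ck 1 D (fun u => / den k R0 t u)).
    { apply (Ck_comp 1 D (fun x => x <> 0) Rinv (fun u => den k R0 t u)); auto using open_neq0, Ck_inv, Ck_den.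
      intros u _. assert (H := den_pos k R0 t u HR). lra. }
    destruct Hc as [Hc _]. auto. }
  unfold Xi.
  replace (2 * qq t u0) with (2 * qq t u0 + mu k R0 t u0 ^ 2) by (rewrite Hmu0; ring).
  apply (is_derive_prod0 (fun u => 2 * mu k R0 t u) (fun u => / (2 * qq t u + mu k R0 t u ^ 2))).
  - rewrite Hmu0; ring.
  - apply is_derive_scal; auto.
  - assert (Hc : Ck 1 D (fun u => / (2 * qq t u + mu k R0 t u ^ 2))).
    { apply (Ck_comp 1 D (fun x => x <> 0) Rinv (fun u => 2 * qq t u + mu k R0 t u ^ 2)); auto using open_neq0, Ck_inv.
      apply Ck_plus; auto. apply Ck_mult; auto using Ck_const, Ck_q. apply Ck_pow; auto. apply Ck_mu; auto. }
    destruct Hc as [Hc _]. auto.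
Qed.

Lemma sqrt_1u u : 1 <= sqrt (1 + u ^ 2) /\ sqrt (1 + u ^ 2) * sqrt (1 + u ^ 2) = 1 + u ^ 2.
Proof.
  split.
  - assert (H := sqrt_le_1_alt 1 (1 + u ^ 2)). rewrite sqrt_1 in H. apply H. nra.
  - apply sqrt_sqrt. nra.
Qed.

Lemma M_root k R0 t u : 0 < R0 -> 0 < Dsc k R0 t u ->
  gk k t u + KK k R0 * mu k R0 t u ^ 2 - 2 * R0 * sqrt (1 + u ^ 2) * mu k R0 t u = 0.
Proof.
  intros HR HDs.
  assert (HP := den_pos k R0 t u HR).
  destruct (sqrt_1u u) as [Hm1 Hm].
  assert (HD := sqrt_sqrt _ (Rlt_le _ _ HDs)).
  unfold mu. unfold den in *.
  set (m := sqrt (1 + u ^ 2)) in *. set (D := sqrt (Dsc k R0 t u)) in *.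
  unfold Dsc in HD.
  set (P := R0 * m + D) in *.
  set (g := gk k t u) in *.
  assert (E : g + KK k R0 * (g / P) ^ 2 - 2 * R0 * m * (g / P)
             = g / P ^ 2 * (P * P - 2 * R0 * m * P + KK k R0 * g)) by (field; lra).
  rewrite E.
  replace (P * P - 2 * R0 * m * P + KK k R0 * g) with (D * D - (R0 ^ 2 * (m * m) - KK k R0 * g)) by (unfold P; ring).
  rewrite Hm, HD. ring.
Qed.

Lemma small_root k R0 t u w : 0 < R0 -> 0 < KK k R0 -> 0 < Dsc k R0 t u ->
  gk k t u + KK k R0 * w ^ 2 - 2 * R0 * sqrt (1 + u ^ 2) * w = 0 ->
  Rabs w < R0 / KK k R0 -> w = mu k R0 t u.
Proof.
  intros HR HK HDs Hw Hwb.
  assert (HP := den_pos k R0 t u HR).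
  destruct (sqrt_1u u) as [Hm1 Hm].
  assert (HD := sqrt_sqrt _ (Rlt_le _ _ HDs)).
  assert (HD0 := sqrt_pos (Dsc k R0 t u)).
  unfold mu. unfold den in *.
  set (m := sqrt (1 + u ^ 2)) in *. set (D := sqrt (Dsc k R0 t u)) in *.
  unfold Dsc in HD. set (K := KK k R0) in *. set (g := gk k t u) in *.
  assert (E : (K * w - R0 * m - D) * (K * w - R0 * m + D) = 0).
  { replace ((K * w - R0 * m - D) * (K * w - R0 * m + D))
      with (K * (g + K * w ^ 2 - 2 * R0 * m * w) + (R0 ^ 2 * (m * m) - K * g) - D * D) by ring.
    rewrite Hw, Hm, HD. ring. }
  apply Rmult_integral in E. destruct E as [E|E].
  - exfalso. assert (Hwa := abs_b w).
    assert (K * w = R0 * m + D) by lra.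
    assert (R0 <= K * w) by nra.
    assert (K * Rabs w < R0).
    { apply (Rmult_lt_compat_l K) in Hwb; auto. replace (K * (R0 / K)) with R0 in Hwb by (field; lra). exact Hwb. }
    nra.
  - assert (K * w * (R0 * m + D) = K * g).
    { replace (K * w) with (R0 * m - D) by lra.
      replace ((R0 * m - D) * (R0 * m + D)) with (R0 ^ 2 * (m * m) - D * D) by ring.
      rewrite Hm, HD. unfold Dsc. ring. }
    apply (Rmult_eq_reg_l (R0 * m + D)); [|lra].
    field_simplify; [|lra].
    apply (Rmult_eq_reg_l K); [|lra]. lra.
Qed.

Lemma sign_q q M : q <> 0 -> 4 * M ^ 2 <= Rabs (2 * q) ->
  0 < (2 * q - M ^ 2) * (2 * q + M ^ 2).
Proof.
  intros Hq HM. unfold Rabs in HM. destruct (Rcase_abs (2 * q)); destruct (Rdichotomy _ _ Hq); nra.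
Qed.

Lemma key k R0 t X u :
  0 < R0 -> 0 < KK k R0 -> X <> 0 -> 0 <= 1 - 2 * qq t u * X ^ 2 ->
  Rabs ((1 - sqrt (1 - 2 * qq t u * X ^ 2)) / X) < R0 / KK k R0 ->
  0 < Dsc k R0 t u -> 4 * mu k R0 t u ^ 2 <= Rabs (2 * qq t u) -> qq t u <> 0 ->
  (Gred k R0 t X u = 0 <-> Xi k R0 t u = X \/ Xi k R0 t u = - X).
Proof.
  intros HR HK HX Hpos Hnu HDs HM Hq.
  assert (Hs := sign_q _ _ Hq HM).
  assert (HMr := M_root k R0 t u HR HDs).
  destruct (sqrt_1u u) as [Hm1 Hm].
  destruct (Gred_fact k R0 t X u HX Hpos) as [E1 E2].
  assert (Hden : 2 * qq t u + mu k R0 t u ^ 2 <> 0) by (intro E; rewrite E in Hs; lra).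
  split.
  - intros HG. rewrite E1 in HG.
    set (nu := (1 - sqrt (1 - 2 * qq t u * X ^ 2)) / X) in *.
    set (m := sqrt (1 + u ^ 2)) in *.
    assert (HF : (gk k t u + KK k R0 * nu ^ 2 - 2 * R0 * m * nu) *
                 (gk k t u + KK k R0 * (- nu) ^ 2 - 2 * R0 * m * (- nu)) = 0).
    { rewrite <- HG. replace (1 + u ^ 2) with (m * m) by exact Hm. ring. }
    apply Rmult_integral in HF. destruct HF as [HF|HF].
    + left. apply small_root in HF; auto.
      unfold Xi. rewrite <- HF. rewrite E2. field. rewrite <- HF in Hden. exact Hden.
    + right. apply small_root in HF; auto.
      2: { rewrite Rabs_Ropp. exact Hnu. }
      unfold Xi. rewrite <- HF. 
      replace ((- nu) ^ 2) with (nu ^ 2) by ring.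
      replace (2 * - nu) with (- (2 * nu)) by ring. rewrite E2. field.
      rewrite <- HF in Hden. replace ((- nu) ^ 2) with (nu ^ 2) in Hden by ring. exact Hden.
  - intros HXi.
    assert (Hex : exists sg, (sg = 1 \/ sg = -1) /\ X = 2 * (sg * mu k R0 t u) / (2 * qq t u + (sg * mu k R0 t u) ^ 2)).
    { destruct HXi as [H|H].
      - exists 1. split; [left; reflexivity|]. rewrite <- H. unfold Xi. field. exact Hden.
      - exists (-1). split; [right; reflexivity|].
        replace X with (- Xi k R0 t u) by lra. unfold Xi.
        replace ((-1 * mu k R0 t u) ^ 2) with (mu k R0 t u ^ 2) by ring. field. exact Hden. }
    destruct Hex as [sg [Hsg HXe]].
    assert (Hsg2 : sg ^ 2 = 1) by (destruct Hsg; subst; ring).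
    set (n0 := sg * mu k R0 t u) in *.
    assert (Hn0 : n0 ^ 2 = mu k R0 t u ^ 2) by (unfold n0; rewrite Rpow_mult_distr, Hsg2; ring).
    assert (Hden' : 2 * qq t u + n0 ^ 2 <> 0) by (rewrite Hn0; exact Hden).
    assert (Hs' : 0 < (2 * qq t u - n0 ^ 2) * (2 * qq t u + n0 ^ 2)) by (rewrite Hn0; exact Hs).
    assert (HS : sqrt (1 - 2 * qq t u * X ^ 2) = 1 - n0 * X).
    { assert (Hnn : 0 <= 1 - n0 * X).
      { rewrite HXe. replace (1 - n0 * (2 * n0 / (2 * qq t u + n0 ^ 2)))
          with ((2 * qq t u - n0 ^ 2) * (2 * qq t u + n0 ^ 2) / (2 * qq t u + n0 ^ 2) ^ 2)
          by (field; exact Hden').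
        apply Rlt_le, Rdiv_lt_0_compat; auto.
        destruct (Rdichotomy _ _ Hden'); nra. }
      rewrite <- (sqrt_pow2 (1 - n0 * X)) by exact Hnn. f_equal.
      rewrite HXe. field. exact Hden'. }
    rewrite E1. rewrite HS.
    replace ((1 - (1 - n0 * X)) / X) with n0 by (field; exact HX).
    rewrite Hn0. rewrite <- Hm.
    set (m := sqrt (1 + u ^ 2)) in *. set (M := mu k R0 t u) in *.
    replace ((gk k t u + KK k R0 * M ^ 2) ^ 2 - 4 * R0 ^ 2 * (m * m) * M ^ 2)
      with ((gk k t u + KK k R0 * M ^ 2 - 2 * R0 * m * M) * (gk k t u + KK k R0 * M ^ 2 + 2 * R0 * m * M)) by ring.
    rewrite HMr. ring.
Qed.

Lemma near_facts k R0 t u h : 0 < R0 -> 0 < KK k R0 -> k <> 0 ->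
  h <= 1 / 2 -> h <= R0 ^ 2 / (2 * KK k R0) -> h <= R0 ^ 2 / (8 * Rabs k) ->
  Rabs (gk k t u) <= h ->
  0 < Dsc k R0 t u /\ 4 * mu k R0 t u ^ 2 <= Rabs (2 * qq t u) /\ qq t u <> 0.
Proof.
  intros HR HK Hk Hh1 Hh2 Hh3 Hg.
  assert (Hka : 0 < Rabs k) by (apply Rabs_pos_lt; exact Hk).
  assert (Hga := abs_b (gk k t u)).
  assert (Hq : 2 * k * qq t u = 1 - gk k t u) by (rewrite g_q; ring).
  assert (Hkq : 1 / 2 <= Rabs k * Rabs (2 * qq t u)).
  { rewrite <- Rabs_mult. replace (k * (2 * qq t u)) with (1 - gk k t u) by (rewrite <- Hq; ring).
    assert (H := Rabs_triang_inv 1 (gk k t u)). rewrite Rabs_R1 in H. lra. }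
  assert (Hq0 : qq t u <> 0).
  { intro E. rewrite E in Hkq. rewrite Rmult_0_r, Rabs_R0, Rmult_0_r in Hkq. lra. }
  assert (Hden := den_pos k R0 t u HR).
  assert (Hmu : Rabs (mu k R0 t u) <= h / R0).
  { unfold mu. unfold Rdiv. rewrite Rabs_mult. rewrite Rabs_Rinv by lra.
    rewrite (Rabs_pos_eq (den k R0 t u)) by lra.
    apply Rmult_le_compat; auto using Rabs_pos.
    - apply Rlt_le, Rinv_0_lt_compat; lra.
    - apply Rinv_le_contravar; lra. }
  assert (Hh0 : 0 <= h) by (assert (H := Rabs_pos (gk k t u)); lra).
  assert (Hmu2 : mu k R0 t u ^ 2 <= (h / R0) ^ 2).
  { rewrite <- (pow2_abs (mu k R0 t u)). assert (H := Rabs_pos (mu k R0 t u)). apply pow_incr. lra. }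
  assert (H4 : 4 * (h / R0) ^ 2 * Rabs k <= 1 / 4).
  { assert (Hhk : 8 * Rabs k * h <= R0 ^ 2).
    { apply (Rmult_le_compat_l (8 * Rabs k)) in Hh3; [|lra].
      replace (8 * Rabs k * (R0 ^ 2 / (8 * Rabs k))) with (R0 ^ 2) in Hh3 by (field; lra). lra. }
    replace (4 * (h / R0) ^ 2 * Rabs k) with (h * (8 * Rabs k * h) / (2 * R0 ^ 2)) by (field; lra).
    apply Rmult_le_reg_r with (2 * R0 ^ 2); [nra|].
    unfold Rdiv. rewrite Rmult_assoc, Rinv_l by nra. nra. }
  split; [|split; [|exact Hq0]].
  - unfold Dsc. assert (Hkh : KK k R0 * h <= R0 ^ 2 / 2).
    { apply (Rmult_le_compat_l (KK k R0)) in Hh2; [|lra].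
      replace (KK k R0 * (R0 ^ 2 / (2 * KK k R0))) with (R0 ^ 2 / 2) in Hh2 by (field; lra). lra. }
    assert (KK k R0 * gk k t u <= KK k R0 * h) by (apply Rmult_le_compat_l; lra).
    nra.
  - assert (4 * mu k R0 t u ^ 2 * Rabs k <= 1 / 4).
    { assert (4 * mu k R0 t u ^ 2 * Rabs k <= 4 * (h / R0) ^ 2 * Rabs k).
      { apply Rmult_le_compat_r; lra. }
      lra. }
    assert (H2q := Rabs_pos (2 * qq t u)).
    apply Rmult_le_reg_r with (Rabs k); auto. nra.
Qed.

Lemma cont_pos f x : ex_derive f x -> 0 < f x ->
  exists d, 0 < d /\ forall y, Rabs (y - x) < d -> 0 < f y.
Proof.
  intros Hd Hf.
  assert (Hc : continuity_pt f x) by (apply derivable_continuous_pt, ex_derive_Reals_0, Hd).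
  unfold continuity_pt, continue_in, limit1_in, limit_in in Hc.
  destruct (Hc (f x / 2)) as [a [Ha H]]; [lra|].
  exists a. split; auto. intros y Hy.
  destruct (Req_dec x y) as [E|E]; [subst; auto|].
  assert (H1 := H y). simpl in H1. unfold R_dist in H1.
  assert (Rabs (f y - f x) < f x / 2).
  { apply H1. split; [split; [exact I|exact E]|exact Hy]. }
  assert (H2 := abs_b (f y - f x)). lra.
Qed.

Lemma sc_bounds t : 2 * Rabs (ss t * cc t) <= 1 /\ ss t ^ 2 <= 1.
Proof.
  assert (H := cs_id t).
  set (s := ss t) in *. set (c := cc t) in *. split; [|nra].
  rewrite Rabs_mult. assert (Hsa := Rabs_pos s). assert (Hca := Rabs_pos c).
  assert (Rabs s ^ 2 = s ^ 2) by (apply pow2_abs).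
  assert (Rabs c ^ 2 = c ^ 2) by (apply pow2_abs).
  assert (0 <= (Rabs s - Rabs c) ^ 2) by apply pow2_ge_0. nra.
Qed.

Lemma g_lip k t u u0 : gk k t u0 = 0 -> Rabs (u - u0) <= 1 ->
  Rabs (gk k t u) <= Rabs (u - u0) * (Rabs k * (2 + 2 * Rabs u0) + 1).
Proof.
  intros Hg Hu.
  destruct (sc_bounds t) as [Hsc Hs].
  assert (E : gk k t u = (u - u0) * (k * (2 * (ss t * cc t)) + k * ss t ^ 2 * (u + u0))).
  { rewrite <- (Rminus_0_r (gk k t u)). rewrite <- Hg. unfold gk. ring. }
  rewrite E, Rabs_mult. apply Rmult_le_compat_l; [apply Rabs_pos|].
  eapply Rle_trans; [apply Rabs_triang|].
  set (sc := ss t * cc t) in *. set (s2 := ss t ^ 2) in *.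
  rewrite !Rabs_mult. rewrite (Rabs_pos_eq 2) by lra.
  rewrite (Rabs_pos_eq s2) by (unfold s2; apply pow2_ge_0).
  assert (Hka := Rabs_pos k).
  assert (Huu : Rabs (u + u0) <= 1 + 2 * Rabs u0).
  { replace (u + u0) with ((u - u0) + 2 * u0) by ring.
    eapply Rle_trans; [apply Rabs_triang|]. rewrite Rabs_mult, (Rabs_pos_eq 2) by lra. lra. }
  assert (Rabs k * (2 * Rabs sc) <= Rabs k * 1) by (apply Rmult_le_compat_l; lra).
  assert (Hs0 : 0 <= s2) by (unfold s2; apply pow2_ge_0).
  assert (Rabs k * s2 * Rabs (u + u0) <= Rabs k * (1 + 2 * Rabs u0)).
  { assert (H1 := Rabs_pos (u + u0)).
    assert (s2 * Rabs (u + u0) <= 1 + 2 * Rabs u0) by nra.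
    rewrite Rmult_assoc. apply Rmult_le_compat_l; lra. }
  lra.
Qed.


Lemma div_zero a b : b <> 0 -> a / b = 0 -> a = 0.
Proof.
  intros Hb H. replace a with (a / b * b) by (field; exact Hb). rewrite H. ring.
Qed.

Lemma sg_equiv a x sg : (sg = 1 \/ sg = -1) ->
  (a = x \/ a = - x <-> sg * a = x \/ sg * a = - x).
Proof. intros [E|E]; subst sg; split; intros [H|H]; lra. Qed.

Lemma crossing k R0 t u0 : 0 < R0 -> t <> 0 -> 0 < KK k R0 -> k <> 0 ->
  gk k t u0 = 0 -> 2 * k * ss t * cc t + 2 * k * ss t ^ 2 * u0 <> 0 ->
  transverse_X_crossing (Gred k R0 t) u0.
Proof.
  intros HR Ht HK Hk Hg0 Hg1.
  set (K := KK k R0) in *.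
  assert (Hka : 0 < Rabs k) by (apply Rabs_pos_lt; exact Hk).
  set (h := Rmin (1 / 2) (Rmin (R0 ^ 2 / (2 * K)) (R0 ^ 2 / (8 * Rabs k)))).
  assert (Hh1 : h <= 1 / 2) by apply Rmin_l.
  assert (Hh2 : h <= R0 ^ 2 / (2 * K)) by (eapply Rle_trans; [apply Rmin_r|apply Rmin_l]).
  assert (Hh3 : h <= R0 ^ 2 / (8 * Rabs k)) by (eapply Rle_trans; [apply Rmin_r|apply Rmin_r]).
  assert (Hhp : 0 < h).
  { unfold h. repeat apply Rmin_pos; apply Rdiv_lt_0_compat; nra. }
  set (L := Rabs k * (2 + 2 * Rabs u0) + 1).
  assert (HL : 1 <= L) by (unfold L; assert (H := Rabs_pos u0); nra).
  set (d0 := Rmin 1 (h / L)).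
  assert (Hd01 : d0 <= 1) by apply Rmin_l.
  assert (Hd02 : d0 <= h / L) by apply Rmin_r.
  assert (Hd0p : 0 < d0) by (apply Rmin_pos; [lra| apply Rdiv_lt_0_compat; lra]).
  set (D0 := fun u => u0 - d0 < u < u0 + d0).
  assert (HD0o : open D0) by apply open_int.
  assert (Hnear : forall u, D0 u -> 0 < Dsc k R0 t u /\ 4 * mu k R0 t u ^ 2 <= Rabs (2 * qq t u) /\ qq t u <> 0).
  { intros u Hu. apply (near_facts k R0 t u h); auto.
    assert (Hu' : Rabs (u - u0) < d0) by (unfold D0 in Hu; apply Rabs_def1; lra).
    eapply Rle_trans; [apply g_lip; [exact Hg0| lra]|].
    apply Rle_trans with (d0 * L); [apply Rmult_le_compat_r; lra|].
    apply (Rmult_le_compat_r L) in Hd02; [|lra].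
    replace (h / L * L) with h in Hd02 by (field; lra). exact Hd02. }
  assert (HDs : forall u, D0 u -> 0 < Dsc k R0 t u) by (intros u Hu; apply Hnear, Hu).
  assert (Hqm : forall u, D0 u -> 2 * qq t u + mu k R0 t u ^ 2 <> 0).
  { intros u Hu. destruct (Hnear u Hu) as [_ [H1 H2]].
    assert (H := sign_q _ _ H2 H1). intro E. rewrite E in H. lra. }
  assert (HCk : forall n, Ck n D0 (fun u => Xi k R0 t u)) by (intros; apply Ck_Xi; auto).
  assert (Hu0 : D0 u0) by (unfold D0; lra).
  assert (Hder := Xi_root_deriv k R0 t D0 u0 HR HD0o Hu0 HDs Hqm Hg0).
  set (d := 2 * ((2 * k * ss t * cc t + 2 * k * ss t ^ 2 * u0) * / den k R0 t u0) * / (2 * qq t u0)) in Hder.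
  assert (Hdnz : d <> 0).
  { unfold d. destruct (Hnear u0 Hu0) as [_ [_ Hq]].
    assert (Hdp := den_pos k R0 t u0 HR).
    apply Rmult_integral_contrapositive_currified.
    apply Rmult_integral_contrapositive_currified; [lra|].
    apply Rmult_integral_contrapositive_currified; auto.
    apply Rinv_neq_0_compat; lra. apply Rinv_neq_0_compat; lra. }
  assert (Hsg : exists sg, (sg = 1 \/ sg = -1) /\ 0 < sg * d).
  { destruct (Rdichotomy _ _ Hdnz). exists (-1); split; [right; reflexivity|lra].
    exists 1; split; [left; reflexivity|lra]. }
  destruct Hsg as [sg [Hsg Hsgd]].
  set (T := fun u => sg * Xi k R0 t u).
  assert (HCkT : forall n, Ck n D0 T) by (intros; apply Ck_mult; auto using Ck_const).
  assert (HT0 : Derive T u0 = sg * d) by (apply is_derive_unique; apply is_derive_scal; exact Hder).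
  assert (Hcont : exists d1, 0 < d1 /\ forall y, Rabs (y - u0) < d1 -> 0 < Derive T y).
  { apply cont_pos; [|lra]. destruct (HCkT 2%nat) as [_ [H _]]. apply H, Hu0. }
  destruct Hcont as [d1 [Hd1 HT1]].
  set (b0 := Rmin d0 d1).
  assert (Hb01 : b0 <= d0) by apply Rmin_l.
  assert (Hb02 : b0 <= d1) by apply Rmin_r.
  assert (Hb0 : 0 < b0) by (apply Rmin_pos; lra).
  destruct (inv_fun T (u0 - b0) (u0 + b0) (u0 - b0 / 2) (u0 + b0 / 2)) as [p [Hp [HpCk [Hpd Hincr]]]]; try lra.
  { intros n. apply Ck_sub with D0; auto. intros x Hx; unfold D0; lra. }
  { intros u Hu. apply HT1. apply Rabs_def1; lra. }
  set (lb := u0 - b0 / 2) in *. set (ub := u0 + b0 / 2) in *.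
  assert (HTu0 : T u0 = 0).
  { unfold T, Xi. assert (mu k R0 t u0 = 0) by (unfold mu; rewrite Hg0; unfold Rdiv; ring).
    rewrite H. unfold Rdiv. ring. }
  assert (HTlb : T lb < 0) by (rewrite <- HTu0; apply Hincr; unfold lb; lra).
  assert (HTub : 0 < T ub) by (rewrite <- HTu0; apply Hincr; unfold ub; lra).
  assert (Hinvp : forall y u, T lb <= y <= T ub -> lb <= u <= ub -> (T u = y <-> u = p y)).
  { intros y u Hy Hu. destruct (Hp y Hy) as [Hpy HTp]. split.
    - intros E. destruct (Rtotal_order u (p y)) as [H|[H|H]]; auto.
      + assert (T u < T (p y)) by (apply Hincr; unfold lb, ub in *; lra). lra.
      + assert (T (p y) < T u) by (apply Hincr; unfold lb, ub in *; lra). lra.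
    - intros E. rewrite E. exact HTp. }
  assert (Hp0 : p 0 = u0).
  { symmetry. apply Hinvp; [lra| unfold lb, ub; lra| exact HTu0]. }
  set (eps1 := Rmin (T ub) (- T lb)).
  assert (He1 : 0 < eps1) by (apply Rmin_pos; lra).
  assert (He1a : eps1 <= T ub) by apply Rmin_l.
  assert (He1b : eps1 <= - T lb) by apply Rmin_r.
  set (Qb := (2 + Rabs u0) ^ 2).
  assert (HQb : 4 <= Qb) by (unfold Qb; assert (H := Rabs_pos u0); nra).
  set (epsX := Rmin (1 / (2 * Qb)) (R0 / (2 * Qb * K))).
  assert (HeX1 : epsX <= 1 / (2 * Qb)) by apply Rmin_l.
  assert (HeX2 : epsX <= R0 / (2 * Qb * K)) by apply Rmin_r.
  assert (HeX : 0 < epsX) by (apply Rmin_pos; apply Rdiv_lt_0_compat; nra).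
  set (eps := Rmin (b0 / 2) (Rmin eps1 epsX)).
  assert (Heb : eps <= b0 / 2) by apply Rmin_l.
  assert (He1' : eps <= eps1) by (eapply Rle_trans; [apply Rmin_r|apply Rmin_l]).
  assert (HeX' : eps <= epsX) by (eapply Rle_trans; [apply Rmin_r|apply Rmin_r]).
  assert (Hep : 0 < eps) by (apply Rmin_pos; [lra|apply Rmin_pos; lra]).
  set (E := fun y => - eps < y < eps).
  assert (HEo : open E) by apply open_int.
  assert (HpE : forall n, Ck n E p).
  { intros n. apply Ck_sub with (fun y => T lb < y < T ub); auto. intros y Hy; unfold E in Hy; lra. }
  assert (HoE : forall n, Ck n E (fun X => - X)).
  { intros n. apply Ck_ext with (fun X => -1 * X); auto. intros; ring. apply Ck_mult; auto using Ck_const, Ck_id. }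
  assert (Hp2E : forall n, Ck n E (fun X => p (- X))).
  { intros n. apply (Ck_comp n E E p (fun X => - X)); auto. intros x Hx; unfold E in *; lra. }
  exists eps. split; [exact Hep|].
  exists p, (fun X => p (- X)).
  split; [intros n x Hx; apply (Ck_ex_derive_n n E); auto|].
  split; [intros n x Hx; apply (Ck_ex_derive_n n E); auto|].
  split; [exact Hp0|].
  split; [rewrite Ropp_0; exact Hp0|].
  split.
  { assert (Hd0 : is_derive p 0 (/ Derive T (p 0))) by (apply Hpd; lra).
    assert (Hpos : 0 < / Derive T (p 0)).
    { apply Rinv_0_lt_compat. apply HT1. rewrite Hp0. rewrite Rminus_diag_eq, Rabs_R0; auto. }
    assert (Hd2 : is_derive (fun X => p (- X)) 0 (-1 * / Derive T (p 0))).
    { assert (Ho : is_derive (fun X : R => - X) 0 (-1)).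
      { exact (is_derive_opp (fun X : R => X) 0 1 (is_derive_id 0)). }
      assert (H := is_derive_comp p (fun X => - X) 0 (/ Derive T (p 0)) (-1)).
      cbv beta in H. rewrite Ropp_0 in H. apply H; auto. }
    assert (E1 : Derive p 0 = / Derive T (p 0)) by (apply is_derive_unique; exact Hd0).
    assert (E2 : Derive (fun X : R => p (- X)) 0 = -1 * / Derive T (p 0)) by (apply is_derive_unique; exact Hd2).
    rewrite E1, E2. lra. }
  clear Hka Hh1 Hh2 Hh3 Hhp HL Hd02 Hd0p HD0o HDs HCk Hu0 Hder Hdnz Hsgd HCkT HT0 Hd1 HT1
    Hb02 Hb0 Hp HpCk Hpd Hincr HTlb HTub Hp0 He1 HeX HEo HpE HoE Hp2E Hg0 Hg1 Ht Hk HTu0.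
  intros X u HX Hu.
  assert (Hul : lb <= u <= ub) by (unfold lb, ub; apply Rabs_def2 in Hu; lra).
  assert (HuD : D0 u) by (unfold D0; unfold lb, ub in Hul; lra).
  destruct (Hnear u HuD) as [HDsu [HMu Hqu]].
  assert (HXa : - eps1 < X < eps1) by (apply Rabs_def2 in HX; lra).
  assert (HyX : T lb <= X <= T ub) by lra.
  assert (HymX : T lb <= - X <= T ub) by lra.
  assert (HTX : T u = X \/ T u = - X <-> u = p X \/ u = p (- X)).
  { rewrite (Hinvp X u HyX Hul), (Hinvp (- X) u HymX Hul). tauto. }
  rewrite <- HTX.
  assert (HXiT : Xi k R0 t u = X \/ Xi k R0 t u = - X <-> T u = X \/ T u = - X).
  { unfold T. apply sg_equiv; exact Hsg. }
  destruct (Req_dec X 0) as [HX0|HX0].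
  - subst X. rewrite Gred_0. rewrite <- HXiT. rewrite Ropp_0.
    assert (Hdp := den_pos k R0 t u HR).
    assert (Hqm' := Hqm u HuD).
    split.
    + intros Hg. assert (Hg' : gk k t u = 0).
      { assert (Hgg : gk k t u * gk k t u = 0) by (rewrite <- Hg; ring).
        apply Rmult_integral in Hgg. tauto. }
      left. unfold Xi, mu. rewrite Hg'. unfold Rdiv. ring.
    + intros HH. assert (HXi0 : Xi k R0 t u = 0).
      { destruct HH as [H|H]; [exact H|rewrite H; ring]. }
      unfold Xi in HXi0. apply div_zero in HXi0; [|exact Hqm'].
      assert (Hmu0 : mu k R0 t u = 0).
      { replace (mu k R0 t u) with (/ 2 * (2 * mu k R0 t u)) by (field). rewrite HXi0. ring. }
      unfold mu in Hmu0. apply div_zero in Hmu0; [|apply Rgt_not_eq; apply Rlt_le_trans with R0; auto].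
      rewrite Hmu0. ring.
  - rewrite <- HXiT.
    assert (Hu1 : Rabs u <= Rabs u0 + 1).
    { replace u with ((u - u0) + u0) by ring. eapply Rle_trans; [apply Rabs_triang|].
      rewrite (Rplus_comm (Rabs u0) 1). apply Rplus_le_compat_r. apply Rlt_le. apply Rlt_le_trans with eps; [exact Hu|].
      apply Rle_trans with (b0 / 2); [exact Heb|]. apply Rle_trans with (d0 / 2); [lra|]. lra. }
    assert (Hq2 : 2 * Rabs (qq t u) <= Qb).
    { eapply Rle_trans; [apply q_bound|]. unfold Qb. assert (H := Rabs_pos u). apply pow_incr.
      split; [apply Rplus_le_le_0_compat; [lra|exact H]|]. replace (2 + Rabs u0) with (1 + (Rabs u0 + 1)) by ring.
      apply Rplus_le_compat_l. exact Hu1. }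
    assert (HXa' := Rabs_pos X).
    assert (HXe : Rabs X < eps) by exact HX.
    assert (HQe : Qb * eps <= 1 / 2).
    { apply Rle_trans with (Qb * (1 / (2 * Qb))); [apply Rmult_le_compat_l; lra|].
      right. field. lra. }
    assert (HQK : Qb * eps <= R0 / (2 * K)).
    { apply Rle_trans with (Qb * (R0 / (2 * Qb * K))); [apply Rmult_le_compat_l; lra|].
      right. field. lra. }
    assert (Hqa := Rabs_pos (qq t u)).
    assert (HXX : X ^ 2 = Rabs X ^ 2) by (rewrite pow2_abs; reflexivity).
    assert (Hpos : 0 <= 1 - 2 * qq t u * X ^ 2).
    { assert (H1 : Rabs (2 * qq t u * X ^ 2) <= 1 / 2).
      { rewrite Rabs_mult, Rabs_mult, (Rabs_pos_eq 2) by lra.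
        rewrite (Rabs_pos_eq (X ^ 2)) by apply pow2_ge_0. rewrite HXX.
        assert (HX1 : Rabs X ^ 2 <= Rabs X).
        { simpl. rewrite Rmult_1_r. replace (Rabs X) with (Rabs X * 1) at 3 by ring.
          apply Rmult_le_compat_l; lra. }
        assert (2 * Rabs (qq t u) * Rabs X ^ 2 <= Qb * eps).
        { apply Rle_trans with (Qb * Rabs X).
          - apply Rmult_le_compat; [lra|apply pow2_ge_0|lra|lra].
          - apply Rmult_le_compat_l; lra. }
        lra. }
      assert (H2 := abs_b (2 * qq t u * X ^ 2)). lra. }
    apply key; auto.
    eapply Rle_lt_trans; [apply nu_bound; auto|].
    assert (2 * Rabs (qq t u) * Rabs X <= Qb * eps).
    { apply Rmult_le_compat; lra. }
    assert (R0 / (2 * K) < R0 / K).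
    { unfold Rdiv. apply Rmult_lt_compat_l; auto. apply Rinv_lt_contravar; [apply Rmult_lt_0_compat; lra|lra]. }
    unfold K in *. lra.
Qed.


Theorem theorem5 (k R0 t : R) :
  0 < R0 -> t <> 0 -> k <> 0 -> k <> 1 ->
  ((k < 0 \/ 1 < k) ->
     exists up um : R,
       up <> um /\ gk k t up = 0 /\ gk k t um = 0 /\
       (forall u, gk k t u = 0 -> u = up \/ u = um) /\
       transverse_X_crossing (Gred k R0 t) up /\
       transverse_X_crossing (Gred k R0 t) um) /\
  ((0 < k < 1) ->
     (forall u, gk k t u <> 0) /\
     (forall u0, no_branch_at (Gred k R0 t) u0)).
Proof.
  intros HR Ht Hk0 Hk1. split.
  2: { intros Hk. apply part2; auto. }
  intros Hk.
  assert (Hkk : 0 < k * (k - 1)) by (destruct Hk; nra).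
  assert (HK : 0 < KK k R0) by (unfold KK; nra).
  assert (Hs := s_nz t Ht).
  set (s := ss t) in *. set (c := cc t) in *.
  assert (Hs2 : 0 < s ^ 2) by (destruct (Rdichotomy _ _ Hs); nra).
  assert (Hks : k * s ^ 2 <> 0) by (apply Rmult_integral_contrapositive_currified; auto; lra).
  assert (HDp : 0 < k * (k - 1) * s ^ 2) by (apply Rmult_lt_0_compat; auto).
  set (Dl := sqrt (k * (k - 1) * s ^ 2)).
  assert (HDl : 0 < Dl) by (apply sqrt_lt_R0; exact HDp).
  assert (HDl2 : Dl * Dl = k * (k - 1) * s ^ 2) by (apply sqrt_sqrt; lra).
  assert (Hcs := cs_id t). fold s c in Hcs.
  assert (Hfac : forall u, k * s ^ 2 * gk k t u = (k * s ^ 2 * u + k * s * c - Dl) * (k * s ^ 2 * u + k * s * c + Dl)).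
  { intros u. unfold gk. fold s c.
    replace ((k * s ^ 2 * u + k * s * c - Dl) * (k * s ^ 2 * u + k * s * c + Dl))
      with ((k * s ^ 2 * u + k * s * c) ^ 2 - Dl * Dl) by ring.
    rewrite HDl2.
    replace (k * s ^ 2 * (1 - k * s ^ 2 + 2 * k * s * c * u + k * s ^ 2 * u ^ 2))
      with ((k * s ^ 2 * u + k * s * c) ^ 2 - k * (k - 1) * s ^ 2 - k ^ 2 * s ^ 2 * (c ^ 2 + s ^ 2 - 1)) by ring.
    rewrite Hcs. ring. }
  set (up := (- (k * s * c) + Dl) / (k * s ^ 2)).
  set (um := (- (k * s * c) - Dl) / (k * s ^ 2)).
  assert (Hup : k * s ^ 2 * up + k * s * c = Dl) by (unfold up; field; auto).
  assert (Hum : k * s ^ 2 * um + k * s * c = - Dl) by (unfold um; field; auto).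
  assert (Hroot : forall u, gk k t u = 0 <-> u = up \/ u = um).
  { intros u. split.
    - intros Hg. assert (H := Hfac u). rewrite Hg, Rmult_0_r in H.
      symmetry in H. apply Rmult_integral in H. destruct H as [H|H].
      + left. apply (Rmult_eq_reg_l (k * s ^ 2)); auto. lra.
      + right. apply (Rmult_eq_reg_l (k * s ^ 2)); auto. lra.
    - intros [E|E]; subst u; apply (Rmult_eq_reg_l (k * s ^ 2)); auto; rewrite Hfac, Rmult_0_r.
      + rewrite Hup. ring.
      + rewrite Hum. ring. }
  assert (Hgup : gk k t up = 0) by (apply Hroot; left; reflexivity).
  assert (Hgum : gk k t um = 0) by (apply Hroot; right; reflexivity).
  exists up, um. split.
  { intro E. rewrite E in Hup. lra. }
  split; [exact Hgup|]. split; [exact Hgum|]. split; [intros u Hu; apply Hroot; exact Hu|].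
  split.
  - apply crossing; auto. fold s c. intro E.
    assert (2 * Dl = 0) by (rewrite <- Hup; lra). lra.
  - apply crossing; auto. fold s c. intro E.
    assert (2 * Dl = 0) by (replace (2 * Dl) with (- 2 * (- Dl)) by ring; rewrite <- Hum; lra). lra.
Qed.
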